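(* Let $r\geq 1$ be an integer and $N\geq 1$. Then $$ \sum_{a\leq N^r}(\tau_r'(a))^2\leq\left(\sum_{a\leq N}\tau_r(a)\right)^r. $$
   Context: $a$ runs over positive integers. $\tau_r(a)$ is the number of ways to write $a$ as an ordered product of $r$ positive integers, and $\tau_r'(a)$ is the number of ways to write $a$ as an ordered product of $r$ positive integers each of which does not exceed $N$. *)

(* Defs.v *)
From mathcomp Require Import all_boot.
Set Implicit Arguments. Unset Strict Implicit. Unset Printing Implicit Defensive.

(* tau r a : number of ordered r-tuples (x_1,...,x_r) of positive integers
   with x_1 * ... * x_r = a.  For a >= 1 every such factor is <= a, so it
   suffices to range over entries in {0,...,a}. *)
Definition tau (r a : nat) : nat :=
  #|[set t : {ffun 'I_r -> 'I_a.+1} |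
      [forall i, 0 < t i] && (\prod_(i < r) (t i : nat) == a)]|.

Definition tau' (N r a : nat) : nat :=
  #|[set t : {ffun 'I_r -> 'I_N.+1} |
      [forall i, 0 < t i] && (\prod_(i < r) (t i : nat) == a)]|.

(* Main.v *)
Require Import Defs.
From mathcomp Require Import all_boot.
From mathcomp Require Import zify.
Set Implicit Arguments. Unset Strict Implicit. Unset Printing Implicit Defensive.
Definition posf r N (u : {ffun 'I_r -> 'I_N.+1}) := [forall i, 0 < u i].
Definition pr r N (u : {ffun 'I_r -> 'I_N.+1}) := \prod_(i < r) (u i : nat).
Definition Pset r N := [set x : {ffun 'I_r -> 'I_N.+1} * {ffun 'I_r -> 'I_N.+1} |
   [&& posf x.1, posf x.2 & pr x.1 == pr x.2]].
Definition Gset r N := [set u : {ffun 'I_r -> 'I_N.+1} | posf u && (pr u <= N)].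

Lemma stepL r N : \sum_(1 <= a < (N ^ r).+1) (tau' N r a) ^ 2 <= #|Pset r N|.
Proof.
rewrite -[X in _ <= X]sum1_card.
rewrite (partition_big (fun x => (inord (pr x.1) : 'I_(N ^ r).+1)) predT) //=.
apply: leq_trans (_ : \sum_(0 <= a < (N ^ r).+1) (tau' N r a) ^ 2 <= _).
  by rewrite [X in _ <= X]big_ltn // leq_addl.
rewrite big_mkord; apply: leq_sum => j _.
rewrite sum1_card /tau' expnS expn1 -cardsX; apply: subset_leq_card.
apply/subsetP => -[s t]; rewrite !inE /= => /andP [/andP [ps /eqP es] /andP [pt /eqP et]].
by rewrite unfold_in /= inE /posf /pr /= ps pt es et eqxx /= inord_val.
Qed.

Lemma tau0 r : tau r 0 = 0.
Proof.
apply/eqP; rewrite cards_eq0; apply/eqP/setP => t; rewrite !inE.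
apply/negbTE/negP => /andP [/forallP H /eqP E].
have : 0 < \prod_(i < r) (t i : nat) by apply: prodn_gt0 => i; exact: H.
by rewrite E.
Qed.

Lemma fac_le r N (u : {ffun 'I_r -> 'I_N.+1}) i : posf u -> (u i : nat) <= pr u.
Proof.
move=> /forallP H; apply: dvdn_leq; first by apply: prodn_gt0 => k; exact: H.
by rewrite /pr (bigD1 i) //= dvdn_mulr.
Qed.

Lemma stepG r N : #|Gset r N| <= \sum_(1 <= a < N.+1) tau r a.
Proof.
rewrite -sum1_card.
rewrite (partition_big (fun u => (inord (pr u) : 'I_N.+1)) predT) //=.
apply: (@leq_trans (\sum_(0 <= a < N.+1) tau r a)).
  rewrite big_mkord; apply: leq_sum => j _.
  rewrite sum1_card.
  set S := (X in #|X| <= _).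
  pose f (u : {ffun 'I_r -> 'I_N.+1}) := [ffun i => (inord (u i) : 'I_j.+1)].
  have Sprop : forall u, u \in S -> posf u /\ pr u = j.
    move=> u; rewrite unfold_in /= inE => /andP [/andP [pu le] /eqP E].
    by split => //; rewrite -E inordK.
  rewrite -(card_in_imset (f := f)).
    apply: subset_leq_card; apply/subsetP => _ /imsetP [u uS ->].
    have [pu E] := Sprop u uS.
    have fE : forall i, (f u i : nat) = u i.
      by move=> i; rewrite ffunE inordK // ltnS -E fac_le.
    rewrite inE; apply/andP; split.
      apply/forallP => i; rewrite fE; exact: (forallP pu).
    apply/eqP; rewrite -[RHS]E /pr; apply: eq_bigr => i _; by rewrite fE.
  move=> u v uS vS /ffunP H; apply/ffunP => i; apply: val_inj.
  have [pu Eu] := Sprop u uS; have [pv Ev] := Sprop v vS.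
  have := congr1 val (H i); rewrite !ffunE /= !inordK // ltnS.
    by rewrite -Ev fac_le.
  by rewrite -Eu fac_le.
by rewrite big_ltn // tau0.
Qed.

Lemma decomp q (t : nat -> nat) d : (forall j, 0 < t j) -> 0 < d ->
  d %| \prod_(j < q) t j ->
  exists e : nat -> nat, [/\ forall j, 0 < e j, forall j, e j %| t j &
                            \prod_(j < q) e j = d].
Proof.
elim: q d => [|q IH] d tpos dpos.
  rewrite big_ord0 dvdn1 => /eqP ->.
  by exists (fun _ => 1); split => //; rewrite big_ord0.
rewrite big_ord_recr /= => hd.
set g := gcdn d (t q).
have gpos : 0 < g by rewrite gcdn_gt0 dpos.
have Hd : d = d %/ g * g by rewrite divnK // dvdn_gcdl.
have Ht : t q = t q %/ g * g by rewrite divnK // dvdn_gcdr.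
have cop : coprime (d %/ g) (t q %/ g).
  rewrite /coprime; apply/eqP.
  have : g = gcdn (d %/ g) (t q %/ g) * g by rewrite muln_gcdl -Hd -Ht.
  move=> E; apply/eqP; rewrite -(eqn_pmul2r gpos) mul1n; apply/eqP; done.
have hd' : d %/ g %| \prod_(j < q) t j.
  move: hd; rewrite {1}Hd {1}Ht mulnA dvdn_pmul2r // Gauss_dvdl //.
have d'pos : 0 < d %/ g by rewrite divn_gt0 // dvdn_leq // dvdn_gcdl.
have [e' [e'pos e'dvd e'prod]] := IH _ tpos d'pos hd'.
exists (fun j => if j == q then g else e' j); split.
- by move=> j; case: eqP.
- by move=> j; case: eqP => [->|_]; rewrite ?dvdn_gcdr.
rewrite big_ord_recr /= eqxx [in RHS]Hd -e'prod; congr (_ * _).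
by apply: eq_bigr => i _; rewrite ltn_eqF.
Qed.

Lemma exmat p q (s t : nat -> nat) : (forall i, 0 < s i) -> (forall j, 0 < t j) ->
  \prod_(i < p) s i = \prod_(j < q) t j ->
  exists m : nat -> nat -> nat, [/\ forall i j, 0 < m i j,
     forall i, i < p -> \prod_(j < q) m i j = s i &
     forall j, j < q -> \prod_(i < p) m i j = t j].
Proof.
elim: p s t => [|p IH] s t spos tpos.
  rewrite big_ord0 => E.
  exists (fun _ _ => 1); split => // j hj.
  rewrite big_ord0; apply/esym/eqP; rewrite -dvdn1 E.
  by rewrite (bigD1 (Ordinal hj)) //= dvdn_mulr.
rewrite big_ord_recl /= => E.
have hd : s 0 %| \prod_(j < q) t j by rewrite -E dvdn_mulr.
have [e [epos edvd eprod]] := decomp tpos (spos 0) hd.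
have E2 : \prod_(j < q) t j = \prod_(j < q) (t j %/ e j) * s 0.
  rewrite -eprod -big_split /=; apply: eq_bigr => j _; by rewrite divnK.
have E3 : \prod_(i < p) s (bump 0 i) = \prod_(j < q) (t j %/ e j).
  by apply/eqP; rewrite -(eqn_pmul2l (spos 0)) E E2 mulnC.
have t'pos : forall j, 0 < t j %/ e j.
  by move=> j; rewrite divn_gt0 // dvdn_leq.
have [m' [m'pos m'row m'col]] := IH (fun i => s i.+1) _ (fun i => spos _) t'pos E3.
exists (fun i j => if i is i'.+1 then m' i' j else e j); split.
- by move=> [|i] j.
- by move=> [|i] hi //=; apply: m'row.
move=> j hj; rewrite big_ord_recl /= m'col // mulnC divnK //.
Qed.

Definition ext r N (s : {ffun 'I_r -> 'I_N.+1}) (k : nat) : nat :=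
  match (insub k : option 'I_r) with Some i => (s i : nat) | None => 1 end.

Lemma extE r N (s : {ffun 'I_r -> 'I_N.+1}) (i : 'I_r) : ext s i = s i.
Proof. by rewrite /ext valK. Qed.

Lemma ext_pos r N (s : {ffun 'I_r -> 'I_N.+1}) : posf s -> forall k, 0 < ext s k.
Proof. move=> /forallP H k; rewrite /ext; case: insub => //. Qed.

Lemma ext_prod r N (s : {ffun 'I_r -> 'I_N.+1}) : \prod_(i < r) ext s i = pr s.
Proof. by apply: eq_bigr => i _; rewrite extE. Qed.

Definition hmap r N (M : {ffun 'I_r -> {ffun 'I_r -> 'I_N.+1}}) :=
  ([ffun i => (inord (\prod_(j < r) (M i j : nat)) : 'I_N.+1)],
   [ffun j => (inord (\prod_(i < r) (M i j : nat)) : 'I_N.+1)]).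

Lemma stepM r N : #|Pset r N| <= #|Gset r N| ^ r.
Proof.
pose Mset := [set M : {ffun 'I_r -> {ffun 'I_r -> 'I_N.+1}} | [forall i, M i \in Gset r N]].
have -> : #|Gset r N| ^ r = #|Mset|.
  have := @card_ffun_on (ordinal r) _ (mem (Gset r N)); rewrite card_ord => <-; apply: eq_card => M.
  by rewrite /Mset !inE.
apply: leq_trans (leq_imset_card (@hmap r N) Mset).
apply: subset_leq_card; apply/subsetP => -[s t].
rewrite inE /= => /and3P [ps pt /eqP E].
have [m [mpos mrow mcol]] := exmat (ext_pos ps) (ext_pos pt)
   (etrans (ext_prod s) (etrans E (esym (ext_prod t)))).
have mle : forall i j : 'I_r, m i j <= N.
  move=> i j; apply: (@leq_trans (\prod_(k < r) m i k)).
    apply: dvdn_leq; first by apply: prodn_gt0.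
    by rewrite (bigD1 j) //= dvdn_mulr.
  by rewrite mrow // extE -ltnS.
pose M : {ffun 'I_r -> {ffun 'I_r -> 'I_N.+1}} := [ffun i : 'I_r => [ffun j : 'I_r => (inord (m i j) : 'I_N.+1)]].
have ME : forall i j : 'I_r, (M i j : nat) = m i j.
  by move=> i j; rewrite !ffunE inordK // ltnS.
apply/imsetP; exists M.
  rewrite inE; apply/forallP => i; rewrite inE; apply/andP; split.
    by apply/forallP => j; rewrite ME.
  rewrite /pr (eq_bigr _ (fun j _ => ME i j)) mrow // extE -ltnS //.
rewrite /hmap; congr pair; apply/ffunP => i; apply: val_inj; rewrite ffunE /=.
- rewrite (eq_bigr _ (fun j _ => ME i j)) mrow // extE inordK //.
- rewrite (eq_bigr _ (fun j _ => ME j i)) mcol // extE inordK //.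
Qed.

Theorem lemma2p2 (r N : nat) (hr : 1 <= r) (hN : 1 <= N) :
  \sum_(1 <= a < (N ^ r).+1) (tau' N r a) ^ 2
  <= (\sum_(1 <= a < N.+1) tau r a) ^ r.
Proof.
apply: leq_trans (stepL r N) _; apply: leq_trans (stepM r N) _.
by rewrite leq_exp2r // stepG.
Qed.
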